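(* Let $X\subseteq Z$ and $X'\subseteq Z'$ be finite metric spaces with $\varepsilon=d_{GH}((X,Z),(X',Z'))$, and let $f_0,f'_0$ be the linear maps induced by the inclusions. Then there exists a $2\varepsilon$-matching $\sigma^\infty\colon\mathrm{Rep}\,D(f_0)_\infty\nrightarrow\mathrm{Rep}\,D(f'_0)_\infty$, i.e. a partial matching such that matched elements $((\infty,b),i)\mapsto((\infty,b'),j)$ satisfy $|b-b'|\le2\varepsilon$, and every unmatched element $((\infty,b),i)$ of either side satisfies $b\le 2\varepsilon$.
   Context: All vector spaces are over $\mathbb{Z}_2$. For a finite metric space $X$, $\mathrm{VR}_r(X)$ is the graph on $X$ with edges $[x,y]$ for $d^X(x,y)\le r$, and $\mathrm{PH}_0(X)$ is the persistence module $r\mapsto H_0(\mathrm{VR}_r(X))$ with structure maps $\rho_{rs}$ induced by inclusion; $m^U(b)$ is the multiplicity of the finite bar $[0,b)$ of $U$. For $X\subseteq Z$, $V=\mathrm{PH}_0(X)$, $U=\mathrm{PH}_0(Z)$, $f_0\colon V_0\to U_0$ induced by inclusion; with $\ker^+_b(U)=\ker\rho^U_{0b}$, $\ker^-_b(U)=\bigcup_{0\le r<b}\ker\rho^U_{0r}$, $\mathcal{M}^0_f(a,b)=\dim\frac{f_0(\ker^+_a V)\cap \ker^+_b U}{f_0(\ker^-_a V)\cap\ker^+_b U+f_0(\ker^+_a V)\cap \ker^-_b U}$ and $N_f(b)=m^U(b)-\sum_{a>0}\mathcal{M}^0_f(a,b)$. $D(f_0)_\infty$ is the multiset of pairs $(\infty,b)$,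 $b>0$, with multiplicity $N_f(b)$ (only positive multiplicities kept). $\mathrm{Rep}(S,m)=\{(s,\ell):1\le\ell\le m(s)\}$; partial matching = bijection between subsets. $d_{GH}$ of pairs is the infimum over metric spaces $M$ and isometric embeddings $\gamma_Z,\gamma_{Z'}$ of $\max\{d^M_H(\gamma_Z(X),\gamma_{Z'}(X')),d^M_H(\gamma_Z(Z),\gamma_{Z'}(Z'))\}$. *)

(* Defs.v *)
From HB Require Import structures.
From mathcomp Require Import all_boot all_order all_algebra.
From mathcomp Require Import boolp classical_sets reals.
Set Implicit Arguments. Unset Strict Implicit. Unset Printing Implicit Defensive.
Import Order.TTheory GRing.Theory Num.Theory.
Local Open Scope ring_scope.

Section Defs.
Variable R : realType.

Definition is_metric (M : Type) (d : M -> M -> R) : Prop :=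
  (forall x y, d x y = 0 <-> x = y) /\
  (forall x y, d x y = d y x) /\
  (forall x y z, d x z <= d x y + d y z).

Definition isometric (A B : Type) (dA : A -> A -> R) (dB : B -> B -> R)
  (g : A -> B) : Prop := forall x y, dB (g x) (g y) = dA x y.

Local Open Scope classical_set_scope.
Definition hausdorff (M : Type) (d : M -> M -> R) (A B : set M) : R :=
  Num.max (sup [set inf [set d a b | b in B] | a in A])
          (sup [set inf [set d a b | a in A] | b in B]).

Definition fset_to_set (T : finType) (X : {set T}) : set T := fun x => x \in X.

(** Gromov--Hausdorff distance of pairs (X,Z),(X',Z'), where Z (resp. Z')
    is the finite type T (resp. T') with metric d (resp. d') and X (resp. X')
    a subset: infimum over all metric spaces M and isometric embeddings. *)
Definition dGH_values (T T' : finType) (d : T -> T -> R) (d' : T' -> T' -> R)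
  (X : {set T}) (X' : {set T'}) : set R :=
  [set v | exists (M : Type) (dM : M -> M -> R) (g : T -> M) (g' : T' -> M),
     [/\ is_metric dM, isometric d dM g, isometric d' dM g' &
      v = Num.max (hausdorff dM (g @` fset_to_set X) (g' @` fset_to_set X'))
                  (hausdorff dM (range g) (range g'))]].

Definition dGH (T T' : finType) (d : T -> T -> R) (d' : T' -> T' -> R)
  (X : {set T}) (X' : {set T'}) : R := inf (dGH_values d d' X X').
End Defs.

Local Open Scope ring_scope.

(** 0-chains of a finite metric space S over Z_2: C_0(VR_0 S) = H_0(VR_0 S). *)
Definition C0 (S : finType) := 'rV['F_2]_#|S|.
Definition ev (S : finType) (x : S) : C0 S := delta_mx 0 (enum_rank x).

(** ker^+_r = ker rho_{0r} = image of the boundary of VR_r(S) in C_0,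
    i.e. span of e_x + e_y over edges d(x,y) <= r. *)
Definition kerplus (R : realType) (S : finType) (d : S -> S -> R) (r : R) :=
  (\sum_(p : S * S | (d p.1 p.2 <= r)%R) <<ev p.1 + ev p.2>>)%MS.

(** ker^-_b = union over 0 <= r < b of ker rho_{0r}
    = span of e_x + e_y over edges d(x,y) < b  (for b > 0). *)
Definition kerminus (R : realType) (S : finType) (d : S -> S -> R) (b : R) :=
  (\sum_(p : S * S | (d p.1 p.2 < b)%R) <<ev p.1 + ev p.2>>)%MS.

Definition qdim (m n p : nat) (A : 'M['F_2]_(m, n)) (B : 'M['F_2]_(p, n)) : nat :=
  (\rank A - \rank (A :&: B))%N.

(** m^U(b): multiplicity of the bar [0,b) of PH_0(S) = dim ker^+_b / ker^-_b *)
Definition mult (R : realType) (S : finType) (d : S -> S -> R) (b : R) : nat :=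
  qdim (kerplus d b) (kerminus d b).

Definition subX (T : finType) (X : {set T}) := {x : T | x \in X}.
Definition dsub (R : realType) (T : finType) (d : T -> T -> R) (X : {set T})
  (x y : subX X) : R := d (val x) (val y).

(** Matrix of f_0 : V_0 = C_0(X) -> U_0 = C_0(Z), induced by inclusion. *)
Definition f0mx (T : finType) (X : {set T}) : 'M['F_2]_(#|{: subX X}|, #|T|) :=
  \matrix_(i < #|{: subX X}|) ev (val (enum_val i)).

Definition Mf (R : realType) (T : finType) (d : T -> T -> R) (X : {set T})
  (a b : R) : nat :=
  let F := f0mx X in
  let dX := dsub d (X := X) in
  let num := (kerplus dX a *m F :&: kerplus d b)%MS in
  let den := ((kerminus dX a *m F :&: kerplus d b) +
              (kerplus dX a *m F :&: kerminus d b))%MS in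
  qdim num den.

(** positive distances occurring in X (the only a > 0 with M^0_f(a,b) possibly
    nonzero, since otherwise ker^+_a V = ker^-_a V) *)
Definition pos_dists (R : realType) (T : finType) (d : T -> T -> R)
  (X : {set T}) : seq R :=
  undup [seq d p.1 p.2 | p <- enum [set p : T * T | (p.1 \in X) && (p.2 \in X)]
                       & 0 < d p.1 p.2].

Definition Nf (R : realType) (T : finType) (d : T -> T -> R) (X : {set T})
  (b : R) : int :=
  (mult d b)%:Z - (\sum_(a <- pos_dists d X) Mf d X a b)%:Z.

(** Rep D(f_0)_infty : pairs (b, l) with b > 0 and 1 <= l <= N_f(b). *)
Definition inRep (R : realType) (N : R -> int) (s : R * nat) : Prop :=
  0 < s.1 /\ (1 <= s.2)%N /\ s.2%:Z <= N s.1.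

(** partial matching sigma : Rep A -/-> Rep B, encoded as a map that is
    defined (Some) exactly on the matched elements of Rep A, lands in Rep B,
    and is injective there. *)
Definition partial_matching (R : realType) (A B : R * nat -> Prop)
  (sigma : R * nat -> option (R * nat)) : Prop :=
  (forall s t, A s -> sigma s = Some t -> B t) /\
  (forall s1 s2 t, A s1 -> A s2 -> sigma s1 = Some t -> sigma s2 = Some t ->
     s1 = s2).

Definition delta_matching (R : realType) (delta : R) (A B : R * nat -> Prop)
  (sigma : R * nat -> option (R * nat)) : Prop :=
  [/\ partial_matching A B sigma,
      (forall s t, A s -> sigma s = Some t -> `|s.1 - t.1| <= delta),
      (forall s, A s -> sigma s = None -> s.1 <= delta) &
      (forall t, B t -> (~ exists s, A s /\ sigma s = Some t) -> t.1 <= delta)].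

(* Main.v *)
Require Import Defs.
From HB Require Import structures.
From mathcomp Require Import all_boot all_order all_algebra.
From mathcomp Require Import boolp classical_sets reals.
From mathcomp Require Import zify ring lra.
Import Order.TTheory GRing.Theory Num.Theory.
Set Implicit Arguments. Unset Strict Implicit.
Local Open Scope ring_scope.

Lemma metric_ge0 (R : realType) (T : Type) (d : T -> T -> R) :
  is_metric d -> forall x y, 0 <= d x y.
Proof.
move=> [H0 [Hs Ht]] x y.
have := Ht x y x; rewrite (Hs y x) (proj2 (H0 x x) erefl).
lra.
Qed.

Lemma ev_f0 (T : finType) (X : {set T}) (u : subX X) :
  ev u *m f0mx X = ev (val u).
Proof.
by rewrite /ev -rowE rowK enum_rankK.
Qed.

Lemma qdim_sub m p n (A : 'M['F_2]_(m, n)) (B : 'M['F_2]_(p, n)) :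
  (B <= A)%MS -> qdim A B = (\rank A - \rank B)%N.
Proof.
move=> BA; rewrite /qdim; congr (_ - _)%N.
by have /capmx_idPr e := BA; rewrite e.1.
Qed.

Lemma qdim_Mf m1 m2 n (A Am : 'M['F_2]_(m1, n)) (P Q : 'M['F_2]_(m2, n)) :
  (Am <= A)%MS -> (Q <= P)%MS ->
  (qdim (A :&: P)%MS ((Am :&: P) + (A :&: Q))%MS)%:Z =
  ((\rank (A :&: P)%MS)%:Z - (\rank (A :&: Q)%MS)%:Z)
   - ((\rank (Am :&: P)%MS)%:Z - (\rank (Am :&: Q)%MS)%:Z).
Proof.
move=> AmA QP.
have sub: (((Am :&: P) + (A :&: Q)) <= A :&: P)%MS.
  by rewrite addsmx_sub !sub_capmx capmxSl capmxSr (submx_trans (capmxSl _ _) AmA)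
       (submx_trans (capmxSr _ _) QP).
rewrite qdim_sub //.
have h := mxrank_sum_cap (Am :&: P)%MS (A :&: Q)%MS.
have e : \rank ((Am :&: P) :&: (A :&: Q))%MS = \rank (Am :&: Q)%MS.
  apply/eqmx_rank; apply/andP; split.
    rewrite sub_capmx (submx_trans (capmxSl _ _) (capmxSl _ _)) /=.
    exact: (submx_trans (capmxSr _ _) (capmxSr _ _)).
  rewrite !sub_capmx capmxSl capmxSr /= (submx_trans (capmxSl _ _) AmA) /=.
  by rewrite (submx_trans (capmxSr _ _) QP).
rewrite e in h.
have := mxrankS sub; lia.
Qed.

Lemma N_identity m1 m2 m3 n (A : 'M['F_2]_(m1, n)) (P : 'M['F_2]_(m2, n)) (Q : 'M['F_2]_(m3, n)) :
  ((\rank P)%:Z - (\rank Q)%:Z) - ((\rank (A :&: P)%MS)%:Z - (\rank (A :&: Q)%MS)%:Z)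
  = (\rank (P + A)%MS)%:Z - (\rank (Q + A)%MS)%:Z.
Proof.
have h1 := mxrank_sum_cap P A. have h2 := mxrank_sum_cap Q A.
rewrite (capmxC A P) (capmxC A Q).
lia.
Qed.

Lemma exists_min (R : realType) (l : seq R) : l != [::] ->
  exists2 b, b \in l & forall c, c \in l -> b <= c.
Proof.
elim: l => [//|x l IH] _.
case: (altP (l =P [::])) => [->|ln].
  by exists x; rewrite ?mem_seq1 // => c; rewrite mem_seq1 => /eqP ->.
have [b bl bmin] := IH ln.
case: (lerP x b) => xb.
  exists x; first by rewrite mem_head.
  move=> c; rewrite in_cons => /orP [/eqP -> //|cl].
  exact: le_trans xb (bmin c cl).
exists b; first by rewrite in_cons bl orbT.
move=> c; rewrite in_cons => /orP [/eqP ->|cl]; first exact: ltW.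
exact: bmin.
Qed.

Lemma telescope (R : realType) (s : seq R) (F Fm term : R -> int) (Ftop : int) :
  uniq s -> (forall a, a \in s -> 0 < a) ->
  (forall a, a \in s -> term a = F a - Fm a) ->
  (forall (t b : R), 0 <= t -> b \in s -> t < b ->
     (forall c, c \in s -> t < c -> b <= c) -> Fm b = F t) ->
  (forall t : R, 0 <= t -> (forall c, c \in s -> c <= t) -> F t = Ftop) ->
  forall t : R, 0 <= t -> \sum_(a <- s | t < a) term a = Ftop - F t.
Proof.
move=> us spos hterm hFm hFtop.
suff H : forall (n : nat) (t : R), (count (fun a : R => (t < a)%R) s <= n)%N -> 0 <= t ->
  \sum_(a <- s | t < a) term a = Ftop - F t.
  by move=> t t0; apply: (H _ t (leqnn _) t0).
elim=> [|n IH] t cn t0.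
  have hc : ~~ has (fun a : R => (t < a)%R) s by rewrite has_count; lia.
  rewrite big_hasC // (hFtop t t0) ?subrr // => c cs.
  by rewrite leNgt; apply/negP => tc; move/hasPn: hc => /(_ c cs); rewrite tc.
case: (boolP (has (fun a : R => (t < a)%R) s)) => hs; last first.
  rewrite big_hasC // (hFtop t t0) ?subrr // => c cs.
  by rewrite leNgt; apply/negP => tc; move/hasPn: hs => /(_ c cs); rewrite tc.
have ne : filter (fun a : R => (t < a)%R) s != [::].
  by rewrite -size_eq0 size_filter -lt0n -has_count.
have [b bf bmin] := @exists_min R _ ne.
move: (bf); rewrite mem_filter => /andP [tb bs].
have bmin' : forall c, c \in s -> t < c -> b <= c.
  by move=> c cs tc; apply: bmin; rewrite mem_filter tc.
rewrite -big_filter (bigD1_seq b) ?filter_uniq //= big_filter_cond.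
have b0 : 0 <= b by apply: ltW; apply: spos.
rewrite big_seq_cond (eq_bigl (fun a : R => (a \in s) && (b < a)%R)); last first.
  move=> a /=; case: (boolP (a \in s)) => //= ias.
  case: (ltrP b a) => ba.
    by rewrite (lt_trans tb ba) /= (gt_eqF ba).
  case: (ltrP t a) => //= ta.
  have ab : a == b by rewrite eq_le ba bmin'.
  by rewrite ab.
rewrite -big_seq_cond.
rewrite IH //; last first.
  have h1 : (count (fun a : R => (b < a)%R) s = count (fun a : R => (b < a)%R) (filter (fun a : R => (t < a)%R) s))%N.
    rewrite count_filter; apply: eq_count => a /=.
    by case: (ltrP b a) => // ba; rewrite (lt_trans tb ba).
  have h2 : (0 < count (predC (fun a : R => (b < a)%R)) (filter (fun a : R => (t < a)%R) s))%N.
    by rewrite -has_count; apply/hasP; exists b => //=; rewrite ltxx.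
  have := count_predC (fun a : R => (b < a)%R) (filter (fun a : R => (t < a)%R) s).
  rewrite size_filter -h1; lia.
rewrite hterm // (hFm t b) //.
by rewrite addrC subrKA.
Qed.

Lemma sortedA (R : realType) (L : seq R) (i : nat) (s : R) :
  sorted >=%R L -> (i < size L)%N -> s < nth 0 L i ->
  (i < count (fun x : R => (s < x)%R) L)%N.
Proof.
elim: L i => [//|x L IH] i /= sL.
have sL' : sorted >=%R L by move: sL; apply: path_sorted.
have allx : all (fun y => y <= x) L.
  by move: sL; rewrite (path_sortedE ge_trans) => /andP [].
case: i => [|i] /= hi hs; first by rewrite hs.

have xl : (i < size L)%N by [].
have := IH i sL' xl hs.
have : nth 0 L i <= x by move/allP: allx; apply; rewrite mem_nth.
move=> le; rewrite (lt_le_trans hs le) /=; lia.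
Qed.

Lemma sortedB (R : realType) (L : seq R) (i : nat) (s : R) :
  sorted >=%R L -> (i < count (fun x : R => (s < x)%R) L)%N ->
  (i < size L)%N /\ s < nth 0 L i.
Proof.
elim: L i => [//|x L IH] i /= sL.
have sL' : sorted >=%R L by move: sL; apply: path_sorted.
have allx : all (fun y => y <= x) L.
  by move: sL; rewrite (path_sortedE ge_trans) => /andP [].
case: (ltrP s x) => sx /=.
  case: i => [|i] //= hi.
  by have [] := IH i sL' hi.
have c0 : count (fun x : R => (s < x)%R) L = 0%N.
  apply/eqP; rewrite -leqn0 leqNgt -has_count; apply/hasPn => y yL.
  by move/allP: allx => /(_ y yL) yx; rewrite -leNgt (le_trans yx sx).
by rewrite c0.
Qed.

Lemma match_ineq (R : realType) (L L' : seq R) (dl : R) :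
  sorted >=%R L -> sorted >=%R L' -> (forall x, x \in L' -> 0 < x) ->
  (forall r, 0 <= r -> (count (fun x : R => (r + dl < x)%R) L <= count (fun x : R => (r < x)%R) L')%N) ->
  forall i, (i < size L)%N ->
  ((i < size L')%N /\ nth 0 L i - dl <= nth 0 L' i) \/ ((size L' <= i)%N /\ nth 0 L i <= dl).
Proof.
move=> sL sL' pos H i hi.
case: (lerP (nth 0 L i) dl) => hle.
  case: (ltnP i (size L')) => hi'; [left|right] => //; split => //.
  have := pos (nth 0 L' i) (mem_nth 0 hi'); lra.
have key : forall r, 0 <= r -> r < nth 0 L i - dl ->
   (i < size L')%N /\ r < nth 0 L' i.
  move=> r r0 rl; apply: sortedB => //.
  apply: leq_trans (H r r0).
  by apply: sortedA => //; lra.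
have [hi' _] := key 0 (lexx 0) ltac:(lra).
left; split => //.
case: (lerP (nth 0 L i - dl) (nth 0 L' i)) => // hlt.
have p := pos (nth 0 L' i) (mem_nth 0 hi').
have [_ ] := key (nth 0 L' i) (ltW p) hlt.
by rewrite ltxx.
Qed.

Definition topd (R : realType) (T : finType) (d : T -> T -> R) : R :=
  \sum_(p : T * T) d p.1 p.2.

Lemma le_topd (R : realType) (T : finType) (d : T -> T -> R) :
  is_metric d -> forall x y, d x y <= topd d.
Proof.
move=> md x y; rewrite /topd (bigD1 (x, y)) //= lerDl.
by apply: sumr_ge0 => p _; apply: metric_ge0.
Qed.

Lemma kerminus_sub (R : realType) (S : finType) (d : S -> S -> R) (b : R) :
  (kerminus d b <= kerplus d b)%MS.
Proof.
apply/sumsmx_subP => p hp; apply: (sumsmx_sup p) => //; exact: ltW.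
Qed.

Lemma kerplus_mono (R : realType) (S : finType) (d : S -> S -> R) (a b : R) :
  a <= b -> (kerplus d a <= kerplus d b)%MS.
Proof.
move=> ab; apply/sumsmx_subP => p hp; apply: (sumsmx_sup p) => //; exact: le_trans ab.
Qed.

Lemma in_pos_dists (R : realType) (T : finType) (d : T -> T -> R) (X : {set T}) x y :
  x \in X -> y \in X -> 0 < d x y -> d x y \in pos_dists d X.
Proof.
move=> xX yX dp; rewrite /pos_dists mem_undup.
apply/mapP; exists (x, y) => //; rewrite mem_filter dp /= mem_enum inE xX yX //.
Qed.

Lemma pos_dists_pos (R : realType) (T : finType) (d : T -> T -> R) (X : {set T}) a :
  a \in pos_dists d X -> 0 < a.
Proof.
rewrite /pos_dists mem_undup => /mapP [p]; rewrite mem_filter => /andP [h _] ->.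
exact: h.
Qed.

Lemma ev_add_self (S : finType) (x : S) : ev x + ev x = 0.
Proof.
rewrite -mulr2n -scaler_nat.
have -> : (2%:R : 'F_2) = 0 by apply/val_inj.
by rewrite scale0r.
Qed.

Definition Atop (R : realType) (T : finType) (d : T -> T -> R) (X : {set T}) :=
  kerplus (dsub d (X := X)) (topd d) *m f0mx X.

Definition hh (R : realType) (T : finType) (d : T -> T -> R) b m (A : 'M['F_2]_(m, #|T|)) : int :=
  (\rank (A :&: kerplus d b)%MS)%:Z - (\rank (A :&: kerminus d b)%MS)%:Z.

Lemma sumMf (R : realType) (T : finType) (d : T -> T -> R) (X : {set T}) b :
  is_metric d ->
  (\sum_(a <- pos_dists d X) Mf d X a b)%:Z = hh d b (Atop d X).
Proof.
move=> md.
set dX := dsub d (X := X).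
have dX0 : forall u v, 0 <= dX u v by move=> u v; exact: metric_ge0 md _ _.
have dXcase : forall u v, dX u v = 0 \/ dX u v \in pos_dists d X.
  move=> u v; have := dX0 u v; rewrite le_eqVlt => /orP [/eqP <-|hp]; first by left.
  by right; apply: in_pos_dists => //; apply: valP.
rewrite -natz natr_sum.
rewrite big_seq_cond (eq_bigl (fun a => (a \in pos_dists d X) && (0 < a))); last first.
  by move=> a /=; case: (boolP (a \in _)) => //= /pos_dists_pos ->.
rewrite -big_seq_cond.
pose F t := hh d b (kerplus dX t *m f0mx X).
pose Fm t := hh d b (kerminus dX t *m f0mx X).
rewrite (@telescope R (pos_dists d X) F Fm (fun a => (Mf d X a b)%:R) (hh d b (Atop d X))) //.
- have -> : F 0 = 0.
    rewrite /F /hh.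
    have z0 : (kerplus dX 0 <= (0 : 'M['F_2]_(#|{: subX X}|, #|{: subX X}|)))%MS.
      apply/sumsmx_subP => p hp.
      have e : p.1 = p.2.
        apply: val_inj; apply: (proj1 (proj1 md _ _)).
        by apply/le_anti/andP; split; [exact: hp | exact: metric_ge0 md _ _].
      by rewrite genmxE e ev_add_self sub0mx.
    have z : (kerplus dX 0 *m f0mx X <= (0 : 'M['F_2]_(#|{: subX X}|, #|T|)))%MS.
      by have := submxMr (f0mx X) z0; rewrite mul0mx.
    have r0 : forall m (B : 'M['F_2]_(m, #|T|)), \rank (kerplus dX 0 *m f0mx X :&: B)%MS = 0%N.
      move=> m B; have := mxrankS (submx_trans (capmxSl _ B) z).
      rewrite mxrank0; lia.
    by rewrite !r0 subrr.
  by rewrite subr0.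
- exact: undup_uniq.
- exact: pos_dists_pos.
- move=> a _; rewrite natz /F /Fm /hh qdim_Mf //.
    exact: submxMr (kerminus_sub _ _).
  exact: kerminus_sub.
- move=> t c t0 cs tc cmin; rewrite /F /Fm /kerminus /kerplus.
  congr hh; congr (_ *m _); apply: eq_bigl => p /=.
  case: (dXcase p.1 p.2) => [->|hp]; first by rewrite t0 (le_lt_trans t0 tc).
  case: (lerP (dX p.1 p.2) t) => h.
    by rewrite (le_lt_trans h tc).
  by apply/negbTE; rewrite -leNgt; apply: cmin.
- move=> t t0 hc; rewrite /F /Atop /kerplus.
  congr hh; congr (_ *m _); apply: eq_bigl => p /=.
  have htop : dX p.1 p.2 <= topd d by exact: (le_topd md (val p.1) (val p.2)).
  rewrite htop; case: (dXcase p.1 p.2) => [->//|hp].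
  exact: hc.
Qed.

Lemma Nf_eq (R : realType) (T : finType) (d : T -> T -> R) (X : {set T}) b :
  is_metric d ->
  Nf d X b = (\rank (kerplus d b + Atop d X)%MS)%:Z - (\rank (kerminus d b + Atop d X)%MS)%:Z.
Proof.
move=> md; rewrite /Nf /mult qdim_sub ?kerminus_sub // sumMf // /hh.
have := mxrankS (kerminus_sub d b).
have := N_identity (Atop d X) (kerplus d b) (kerminus d b).
lia.
Qed.

Lemma Nf_ge0 (R : realType) (T : finType) (d : T -> T -> R) (X : {set T}) b :
  is_metric d -> 0 <= Nf d X b.
Proof.
move=> md; rewrite Nf_eq //.
have := mxrankS (addsmxS (kerminus_sub d b) (submx_refl (Atop d X))).
lia.
Qed.

Lemma Nf_out (R : realType) (T : finType) (d : T -> T -> R) (X : {set T}) b :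
  is_metric d -> 0 < b -> b \notin pos_dists d [set: T] -> Nf d X b = 0.
Proof.
move=> md b0 bn; rewrite Nf_eq //.
suff -> : kerminus d b = kerplus d b by rewrite subrr.
apply: eq_bigl => p /=; rewrite le_eqVlt; case: eqP => //= e.
move: bn; rewrite -e in_pos_dists ?inE //.
by rewrite e.
Qed.

Definition Dz (R : realType) (T : finType) (d : T -> T -> R) := pos_dists d [set: T].
Definition Nn (R : realType) (T : finType) (d : T -> T -> R) (X : {set T}) b : nat :=
  `|Nf d X b|%N.
Definition RL (R : realType) (T : finType) (d : T -> T -> R) (X : {set T}) : seq (R * nat) :=
  sort (fun p q : R * nat => q.1 <= p.1)
   (flatten [seq [seq (b, l) | l <- iota 1 (Nn d X b)] | b <- Dz d]).
Definition LL (R : realType) (T : finType) (d : T -> T -> R) (X : {set T}) : seq R :=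
  map fst (RL d X).

Lemma Nn_eq (R : realType) (T : finType) (d : T -> T -> R) (X : {set T}) b :
  is_metric d -> (Nn d X b)%:Z = Nf d X b.
Proof. by move=> md; rewrite /Nn gez0_abs // Nf_ge0. Qed.

Lemma mem_RL (R : realType) (T : finType) (d : T -> T -> R) (X : {set T}) s :
  is_metric d -> (s \in RL d X) <-> inRep (Nf d X) s.
Proof.
move=> md; rewrite /RL mem_sort /inRep; split.
  move/flattenP => [sq /mapP [b bD ->] /mapP [l]].
  rewrite mem_iota => /andP [l1 l2] -> /=.
  split; first exact: pos_dists_pos bD.
  split => //; rewrite -Nn_eq //; lia.
case: s => b l /= [b0 [l1 l2]].
have bD : b \in Dz d.
  apply/negPn/negP => bn.
  by move: l2; rewrite Nf_out //; lia.
apply/flattenP; exists [seq (b, l0) | l0 <- iota 1 (Nn d X b)]; first by apply/mapP; exists b.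
apply/mapP; exists l => //; rewrite mem_iota; rewrite -Nn_eq // in l2; lia.
Qed.

Lemma sorted_LL (R : realType) (T : finType) (d : T -> T -> R) (X : {set T}) :
  sorted >=%R (LL d X).
Proof.
have tot : total (fun p q : R * nat => q.1 <= p.1) by move=> p q; exact: le_total.
rewrite /LL sorted_map; exact: (sort_sorted tot _).
Qed.

Lemma LL_pos (R : realType) (T : finType) (d : T -> T -> R) (X : {set T}) x :
  is_metric d -> x \in LL d X -> 0 < x.
Proof.
move=> md /mapP [s sR ->]; have [h _] := (mem_RL X s md).1 sR; exact: h.
Qed.

Lemma count_flat (R : realType) (f : R -> nat) (s : seq R) (r : R) :
  count (fun p : R * nat => (r < p.1)%R) (flatten [seq [seq (b, l) | l <- iota 1 (f b)] | b <- s])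
  = (\sum_(b <- s | (r < b)%R) f b)%N.
Proof.
elim: s => [|b s IH] /=; first by rewrite big_nil.
rewrite count_cat big_cons IH count_map.
case: (ltrP r b) => rb.
  by rewrite (eq_count (a2 := predT)) ?count_predT ?size_iota // => l /=.
by rewrite (eq_count (a2 := pred0)) ?count_pred0 // => l /=; rewrite ltNge rb.
Qed.

Lemma count_LL (R : realType) (T : finType) (d : T -> T -> R) (X : {set T}) r :
  is_metric d -> 0 <= r ->
  (count (fun x => r < x) (LL d X))%:Z =
  (\rank (kerplus d (topd d) + Atop d X)%MS)%:Z - (\rank (kerplus d r + Atop d X)%MS)%:Z.
Proof.
move=> md r0.
rewrite /LL count_map /RL.
rewrite (permP (permEl (perm_sort (fun p q : R * nat => q.1 <= p.1) _))).
rewrite (eq_count (a2 := fun p : R * nat => (r < p.1)%R)) //.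
rewrite (count_flat (Nn d X) (Dz d) r).
rewrite -natz natr_sum.
rewrite big_seq_cond (eq_bigr (fun b => Nf d X b)); last first.
  by move=> b _; rewrite natz Nn_eq.
rewrite -big_seq_cond.
pose F t := (\rank (kerplus d t + Atop d X)%MS)%:Z.
pose Fm t := (\rank (kerminus d t + Atop d X)%MS)%:Z.
have d0 : forall x y, 0 <= d x y by exact: metric_ge0 md.
have dcase : forall x y, d x y = 0 \/ d x y \in Dz d.
  move=> x y; have := d0 x y; rewrite le_eqVlt => /orP [/eqP <-|hp]; first by left.
  by right; apply: in_pos_dists; rewrite ?inE.
apply: (@telescope R (Dz d) F Fm (Nf d X) (F (topd d))) => //.
- exact: undup_uniq.
- exact: pos_dists_pos.
- by move=> a _; rewrite Nf_eq.
- move=> t c t0 cs tc cmin; rewrite /F /Fm /kerminus /kerplus.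
  congr (Posz (\rank (_ + _))); apply: eq_bigl => p /=.
  case: (dcase p.1 p.2) => [->|hp]; first by rewrite t0 (le_lt_trans t0 tc).
  case: (lerP (d p.1 p.2) t) => h.
    by rewrite (le_lt_trans h tc).
  by apply/negbTE; rewrite -leNgt; apply: cmin.
- move=> t t0 hc; rewrite /F /kerplus.
  congr (Posz (\rank (_ + _))); apply: eq_bigl => p /=.
  have htop : d p.1 p.2 <= topd d by exact: (le_topd md p.1 p.2).
  rewrite htop; case: (dcase p.1 p.2) => [->//|hp].
  exact: hc.
Qed.

Definition Phimx (T T' : finType) (phi : T -> T') : 'M['F_2]_(#|T|, #|T'|) :=
  \matrix_(i < #|T|) ev (phi (enum_val i)).

Lemma ev_Phi (T T' : finType) (phi : T -> T') x : ev x *m Phimx phi = ev (phi x).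
Proof. by rewrite /ev -rowE rowK enum_rankK. Qed.

Lemma rank_map (R : realType) (T T' : finType) (d : T -> T -> R) (d' : T' -> T' -> R)
  (X : {set T}) (X' : {set T'}) (phi : T -> T') (c r : R) :
  is_metric d -> is_metric d' -> 0 <= c -> 0 <= r ->
  (forall x y, d' (phi x) (phi y) <= d x y + c) ->
  (forall x, x \in X -> phi x \in X') ->
  (forall y, exists x, d' y (phi x) <= c) ->
  (#|T'| + \rank (kerplus d r + Atop d X)%MS <= #|T| + \rank (kerplus d' (r + c) + Atop d' X')%MS)%N.
Proof.
move=> md md' c0 r0 hphi hX hsurj.
set Phi := Phimx phi.
set S := (kerplus d r + Atop d X)%MS.
set S' := (kerplus d' (r + c) + Atop d' X')%MS.
have h1 : (kerplus d r *m Phi <= kerplus d' (r + c))%MS.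
  rewrite (sumsmxMr_gen _ _ Phi); apply/sumsmx_subP => p hp; rewrite genmxE.
  apply: submx_trans (submxMr Phi (_ : (<<ev p.1 + ev p.2>> <= (ev p.1 + ev p.2)%R)%MS)) _.
    by rewrite genmxE submx_refl.
  rewrite mulmxDl !ev_Phi.
  apply: (sumsmx_sup (phi p.1, phi p.2)) => /=; last by rewrite genmxE submx_refl.
  by apply: le_trans (hphi _ _) _; rewrite lerD2r.
have h2 : (Atop d X *m Phi <= Atop d' X')%MS.
  rewrite /Atop -mulmxA (sumsmxMr_gen _ _ (f0mx X *m Phi)); apply/sumsmx_subP => p hp; rewrite genmxE.
  apply: submx_trans (submxMr _ (_ : (<<ev p.1 + ev p.2>> <= (ev p.1 + ev p.2)%R)%MS)) _.
    by rewrite genmxE submx_refl.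
  pose u1 : subX X' := exist _ (phi (val p.1)) (hX _ (valP p.1)).
  pose u2 : subX X' := exist _ (phi (val p.2)) (hX _ (valP p.2)).
  have -> : (ev p.1 + ev p.2) *m (f0mx X *m Phi) = (ev u1 + ev u2) *m f0mx X'.
    by rewrite mulmxA !mulmxDl !ev_f0 !ev_Phi.
  apply: submxMr.
  apply: (sumsmx_sup (u1, u2)) => /=; last by rewrite genmxE submx_refl.
  exact: (le_topd md').
have hS : (S *m Phi <= S')%MS.
  by rewrite /S (addsmxMr _ _ Phi) addsmxS.
have hfull : (1%:M <= Phi + S')%MS.
  apply/row_subP => i; rewrite row1.
  have [x hx] := hsurj (enum_val i).
  have -> : delta_mx 0 i = (ev (enum_val i) + ev (phi x)) + ev (phi x).
    by rewrite -addrA ev_add_self addr0 /ev enum_valK.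
  rewrite addrC; apply: addmx_sub_adds.
    by rewrite -ev_Phi /Phi /ev -rowE row_sub.
  apply: submx_trans (addsmxSl _ _).
  apply: (sumsmx_sup (enum_val i, phi x)) => /=; last by rewrite genmxE submx_refl.
  by apply: le_trans hx _; rewrite lerDr.
have hPhi : (Phi <= S' + (S^C *m Phi))%MS.
  rewrite -[Phi]mul1mx.
  apply: submx_trans (submxMr Phi (submx_full _ (addsmx_compl_full S))) _.
  by rewrite (addsmxMr _ _ Phi) mul1mx (addsmxS hS (submx_refl _)).
have k1 : (#|T'| <= \rank (S' + (S^C *m Phi))%MS)%N.
  rewrite -{1}(mxrank1 'F_2 #|T'|); apply: mxrankS.
  apply: submx_trans hfull _; rewrite addsmx_sub hPhi /=; exact: addsmxSl.
have k2 := mxrank_sum_cap S' ((S^C)%MS *m Phi).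
have k3 := mxrankM_maxl (S^C)%MS Phi.
have k4 := mxrank_compl S.
have k5 := rank_leq_col S.
lia.
Qed.

Local Open Scope classical_set_scope.

Lemma fin_ub (R : realType) (U : finType) (f : U -> R) (P : set U) :
  has_ubound [set f u | u in P].
Proof.
exists (\sum_(w : U) `|f w|) => _ [u _ <-].
rewrite (bigD1 u) //=; apply: le_trans (ler_norm _) _.
by rewrite lerDl sumr_ge0 // => w _; exact: normr_ge0.
Qed.

Lemma inf_img_ge (R : realType) (M : Type) (dM : M -> M -> R) (U' : finType) (f' : U' -> M)
   (P' : set U') (a : M) (v : R) :
  P' !=set0 -> (forall u', P' u' -> v <= dM a (f' u')) ->
  v <= inf [set dM a b | b in f' @` P'].
Proof.
move=> [u0 Pu0] h; apply: lb_le_inf.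
  by exists (dM a (f' u0)); exists (f' u0) => //; exists u0.
by move=> _ [_ [u' Pu' <-] <-]; apply: h.
Qed.

Lemma inf_img_ge' (R : realType) (M : Type) (dM : M -> M -> R) (U : finType) (f : U -> M)
   (P : set U) (b : M) (v : R) :
  P !=set0 -> (forall u, P u -> v <= dM (f u) b) ->
  v <= inf [set dM a b | a in f @` P].
Proof.
move=> [u0 Pu0] h; apply: lb_le_inf.
  by exists (dM (f u0) b); exists (f u0) => //; exists u0.
by move=> _ [_ [u Pu <-] <-]; apply: h.
Qed.

Lemma haus1 (R : realType) (U U' : finType) (M : Type) (dM : M -> M -> R)
  (f : U -> M) (f' : U' -> M) (P : set U) (P' : set U') (v e : R) :
  P' !=set0 -> hausdorff dM (f @` P) (f' @` P') <= v -> 0 < e ->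
  forall u, P u -> exists u', [/\ P' u' & dM (f u) (f' u') < v + e].
Proof.
move=> P'n hv e0 u Pu.
apply: contrapT => hn.
have h : v + e <= inf [set dM (f u) b | b in f' @` P'].
  apply: inf_img_ge => // u' Pu'; rewrite leNgt; apply/negP => hl.
  by apply: hn; exists u'.
have h2 : inf [set dM (f u) b | b in f' @` P'] <=
          sup [set inf [set dM a b | b in f' @` P'] | a in f @` P].
  apply: ub_le_sup; last by exists (f u) => //; exists u.
  have := fin_ub (fun w => inf [set dM (f w) b | b in f' @` P']) P.
  move=> [y hy]; exists y => _ [_ [w Pw <-] <-]; apply: hy; exists w => //.
have h3 : sup [set inf [set dM a b | b in f' @` P'] | a in f @` P] <= v.
  by apply: le_trans hv; rewrite /hausdorff le_max lexx.
lra.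
Qed.

Lemma haus2 (R : realType) (U U' : finType) (M : Type) (dM : M -> M -> R)
  (f : U -> M) (f' : U' -> M) (P : set U) (P' : set U') (v e : R) :
  P !=set0 -> hausdorff dM (f @` P) (f' @` P') <= v -> 0 < e ->
  forall u', P' u' -> exists u, [/\ P u & dM (f u) (f' u') < v + e].
Proof.
move=> Pn hv e0 u' Pu'.
apply: contrapT => hn.
have h : v + e <= inf [set dM a (f' u') | a in f @` P].
  apply: inf_img_ge' => // u Pu; rewrite leNgt; apply/negP => hl.
  by apply: hn; exists u.
have h2 : inf [set dM a (f' u') | a in f @` P] <=
          sup [set inf [set dM a b | a in f @` P] | b in f' @` P'].
  apply: ub_le_sup; last by exists (f' u') => //; exists u'.
  have := fin_ub (fun w => inf [set dM a (f' w) | a in f @` P]) P'.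
  move=> [y hy]; exists y => _ [_ [w Pw <-] <-]; apply: hy; exists w => //.
have h3 : sup [set inf [set dM a b | a in f @` P] | b in f' @` P'] <= v.
  by apply: le_trans hv; rewrite /hausdorff le_max lexx orbT.
lra.
Qed.

Lemma haus_ge0 (R : realType) (U U' : finType) (M : Type) (dM : M -> M -> R)
  (f : U -> M) (f' : U' -> M) (P : set U) (P' : set U') :
  is_metric dM -> P !=set0 -> P' !=set0 -> 0 <= hausdorff dM (f @` P) (f' @` P').
Proof.
move=> md [u Pu] P'n.
have h : 0 <= inf [set dM (f u) b | b in f' @` P'].
  by apply: inf_img_ge => // u' _; exact: metric_ge0 md _ _.
have h2 : inf [set dM (f u) b | b in f' @` P'] <=
          sup [set inf [set dM a b | b in f' @` P'] | a in f @` P].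
  apply: ub_le_sup; last by exists (f u) => //; exists u.
  have := fin_ub (fun w => inf [set dM (f w) b | b in f' @` P']) P.
  move=> [y hy]; exists y => _ [_ [w Pw <-] <-]; apply: hy; exists w => //.
rewrite /hausdorff le_max; apply/orP; left; exact: le_trans h h2.
Qed.

Definition dsum (R : realType) (T T' : finType) (d : T -> T -> R) (d' : T' -> T' -> R)
  (a b : (T + T')%type) : R :=
  match a, b with
  | inl x, inl y => d x y
  | inr x, inr y => d' x y
  | _, _ => 1 + topd d + topd d'
  end.

Lemma dsum_metric (R : realType) (T T' : finType) (d : T -> T -> R) (d' : T' -> T' -> R) :
  is_metric d -> is_metric d' -> is_metric (dsum d d').
Proof.
move=> md md'.
have t0 : 0 <= topd d by apply: sumr_ge0 => p _; exact: metric_ge0 md _ _.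
have t0' : 0 <= topd d' by apply: sumr_ge0 => p _; exact: metric_ge0 md' _ _.
have g0 := metric_ge0 md; have g0' := metric_ge0 md'.
have l0 := le_topd md; have l0' := le_topd md'.
have [m1 [m2 m3]] := md; have [m1' [m2' m3']] := md'.
split; [|split].
- case=> [x|x] [y|y] /=; split => //.
  + by move/m1 => ->.
  + by case=> ->; apply/m1.
  + by move=> h; exfalso; lra.
  + by move=> h; exfalso; lra.
  + by move/m1' => ->.
  + by case=> ->; apply/m1'.
- by case=> [x|x] [y|y] /=.
- case=> [x|x] [y|y] [z|z] /=.
  + by apply: m3.
  + by have := g0 x y; lra.
  + by have := l0 x z; lra.
  + by have := g0' y z; lra.
  + by have := g0 y z; lra.
  + by have := l0' x z; lra.
  + by have := g0' x y; lra.
  + by apply: m3'.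
Qed.

Lemma card_ne0 (T : finType) (X : {set T}) : (0 < #|X|)%N -> fset_to_set X !=set0.
Proof. by move/card_gt0P => [x xX]; exists x. Qed.

Lemma setT_ne0 (T : finType) (X : {set T}) : (0 < #|X|)%N -> [set: T] !=set0.
Proof. by move/card_gt0P => [x xX]; exists x. Qed.

Lemma dGH_approx (R : realType) (T T' : finType) (d : T -> T -> R) (d' : T' -> T' -> R)
  (X : {set T}) (X' : {set T'}) (eta : R) :
  is_metric d -> is_metric d' -> (0 < #|X|)%N -> (0 < #|X'|)%N -> 0 < eta ->
  0 <= dGH d d' X X' /\
  exists (M : Type) (dM : M -> M -> R) (g : T -> M) (g' : T' -> M),
     [/\ is_metric dM, isometric d dM g, isometric d' dM g',
      hausdorff dM (g @` fset_to_set X) (g' @` fset_to_set X') <= dGH d d' X X' + eta &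
      hausdorff dM (range g) (range g') <= dGH d d' X X' + eta].
Proof.
move=> md md' X0 X0' e0.
have ne : dGH_values d d' X X' !=set0.
  eexists; exists (T + T')%type, (dsum d d'), inl, inr; split => //.
  exact: dsum_metric.
have lb : lbound (dGH_values d d' X X') 0.
  move=> _ [M [dM [g [g' [mM _ _ ->]]]]].
  rewrite le_max; apply/orP; left; apply: haus_ge0 => //; exact: card_ne0.
have hi : has_inf (dGH_values d d' X X') by split => //; exists 0.
split; first exact: lb_le_inf.
have [v [M [dM [g [g' [mM ig ig' ev]]]]] hv] := inf_adherent e0 hi.
exists M, dM, g, g'; split => //.
- by apply: le_trans (ltW hv); rewrite ev le_max lexx.
- by apply: le_trans (ltW hv); rewrite ev le_max lexx orbT.
Qed.

Lemma gh_maps (R : realType) (T T' : finType) (d : T -> T -> R) (d' : T' -> T' -> R)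
  (X : {set T}) (X' : {set T'}) (eta : R) :
  is_metric d -> is_metric d' -> (0 < #|X|)%N -> (0 < #|X'|)%N -> 0 < eta ->
  0 <= dGH d d' X X' /\
  exists (phi : T -> T') (psi : T' -> T),
   [/\ (forall x y, d' (phi x) (phi y) <= d x y + 2 * (dGH d d' X X' + 2 * eta)),
       (forall x, x \in X -> phi x \in X')
       & (forall y, exists x, d' y (phi x) <= 2 * (dGH d d' X X' + 2 * eta))] /\
   [/\ (forall x y, d (psi x) (psi y) <= d' x y + 2 * (dGH d d' X X' + 2 * eta)),
       (forall x, x \in X' -> psi x \in X) &
       (forall y, exists x, d y (psi x) <= 2 * (dGH d d' X X' + 2 * eta))].
Proof.
move=> md md' X0 X0' e0.
have [g0 [M [dM [g [g' [mM ig ig' hX hZ]]]]]] := dGH_approx md md' X0 X0' e0.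
split => //.
set D := dGH d d' X X' + 2 * eta.
have hX1 := haus1 (card_ne0 X0') hX e0.
have hX2 := haus2 (card_ne0 X0) hX e0.
have hZ1 := haus1 (setT_ne0 X0') hZ e0.
have hZ2 := haus2 (setT_ne0 X0) hZ e0.
have [mM1 [mMs mMt]] := mM.
have ephi : forall x : T, exists y : T', (x \in X -> y \in X') /\ dM (g x) (g' y) < D.
  move=> x; case: (boolP (x \in X)) => xX.
    have [y [Py hy]] := hX1 x xX; exists y; split => //.
    by rewrite /D; lra.
  have [y [_ hy]] := hZ1 x I; exists y; split => //.
  by rewrite /D; lra.
have epsi : forall y : T', exists x : T, (y \in X' -> x \in X) /\ dM (g x) (g' y) < D.
  move=> y; case: (boolP (y \in X')) => yX.
    have [x [Px hx]] := hX2 y yX; exists x; split => //.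
    by rewrite /D; lra.
  have [x [_ hx]] := hZ2 y I; exists x; split => //.
  by rewrite /D; lra.
have [phi hphi] := choice ephi.
have [psi hpsi] := choice epsi.
exists phi, psi; split; split.
- move=> x y; rewrite -ig' -ig.
  have := mMt (g' (phi x)) (g x) (g' (phi y)).
  have := mMt (g x) (g y) (g' (phi y)).
  have := mMs (g' (phi x)) (g x).
  have := (hphi x).2; have := (hphi y).2.
  rewrite /D; lra.
- by move=> x xX; apply: (hphi x).1.
- move=> y; have [x [_ hx]] := hZ2 y I; exists x.
  rewrite -ig'.
  have := mMt (g' y) (g x) (g' (phi x)).
  have := mMs (g' y) (g x).
  have := (hphi x).2.
  rewrite /D; lra.
- move=> x y; rewrite -ig' -ig.
  have := mMt (g (psi x)) (g' x) (g (psi y)).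
  have := mMt (g' x) (g' y) (g (psi y)).
  have := mMs (g' y) (g (psi y)).
  have := mMs (g (psi x)) (g' x).
  have := (hpsi x).2; have := (hpsi y).2.
  rewrite /D; lra.
- by move=> x xX; apply: (hpsi x).1.
- move=> x; have [y [_ hy]] := hZ1 x I; exists y.
  rewrite -ig.
  have := mMt (g x) (g' y) (g (psi y)).
  have := mMs (g' y) (g (psi y)).
  have := (hpsi y).2.
  rewrite /D; lra.
Qed.

Local Close Scope classical_set_scope.

Lemma uniq_flat (R : realType) (f : R -> nat) (s : seq R) :
  uniq s -> uniq (flatten [seq [seq (b, l) | l <- iota 1 (f b)] | b <- s]).
Proof.
elim: s => [//|b s IH] /= /andP [bs us].
rewrite cat_uniq IH // andbT map_inj_uniq ?iota_uniq //=; last by move=> x y [].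
apply/hasPn => p /flattenP [q /mapP [c cs ->] /mapP [l _ ->]].
apply/negP => /mapP [l' _ [e _]].
by move: bs; rewrite -e cs.
Qed.

Lemma uniq_RL (R : realType) (T : finType) (d : T -> T -> R) (X : {set T}) :
  uniq (RL d X).
Proof. by rewrite /RL sort_uniq; apply: uniq_flat; exact: undup_uniq. Qed.

Lemma kerplus_top (R : realType) (T : finType) (d : T -> T -> R) t :
  is_metric d -> topd d <= t -> kerplus d t = kerplus d (topd d).
Proof.
move=> md ht; apply: eq_bigl => p /=.
have h := le_topd md p.1 p.2.
by rewrite h (le_trans h ht).
Qed.

Lemma key (R : realType) (T T' : finType) (d : T -> T -> R) (d' : T' -> T' -> R)
  (X : {set T}) (X' : {set T'}) (eta : R) :
  is_metric d -> is_metric d' -> (0 < #|X|)%N -> (0 < #|X'|)%N -> 0 < eta ->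
  0 <= dGH d d' X X' /\
  let c := 2 * (dGH d d' X X' + 2 * eta) in
  (forall i, (i < size (LL d X))%N ->
    ((i < size (LL d' X'))%N /\ nth 0 (LL d X) i - c <= nth 0 (LL d' X') i) \/
    ((size (LL d' X') <= i)%N /\ nth 0 (LL d X) i <= c)) /\
  (forall i, (i < size (LL d' X'))%N ->
    ((i < size (LL d X))%N /\ nth 0 (LL d' X') i - c <= nth 0 (LL d X) i) \/
    ((size (LL d X) <= i)%N /\ nth 0 (LL d' X') i <= c)).
Proof.
move=> md md' X0 X0' e0.
have [g0 [phi [psi [[hphi hphiX hphiS] [hpsi hpsiX hpsiS]]]]] := gh_maps md md' X0 X0' e0.
split => //.
set c := 2 * (dGH d d' X X' + 2 * eta).
have c0 : 0 <= c by rewrite /c; lra.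
have A := fun (r : R) (r0 : 0 <= r) => rank_map md md' c0 r0 hphi hphiX hphiS.
have B := fun (r : R) (r0 : 0 <= r) => rank_map md' md c0 r0 hpsi hpsiX hpsiS.
set m := Num.max (topd d) (topd d').
have tm : topd d <= m by rewrite le_max lexx.
have tm' : topd d' <= m by rewrite le_max lexx orbT.
have t0 : 0 <= topd d by apply: sumr_ge0 => p _; exact: metric_ge0 md _ _.
have t0' : 0 <= topd d' by apply: sumr_ge0 => p _; exact: metric_ge0 md' _ _.
have m0 : 0 <= m by exact: le_trans tm.
have A0 := A m m0. have B0 := B m m0.
rewrite !(kerplus_top md) ?(kerplus_top md') // in A0 B0; try lra.
have cnt1 : forall r : R, 0 <= r ->
  (count (fun x : R => (r + c < x)%R) (LL d' X') <= count (fun x : R => (r < x)%R) (LL d X))%N.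
  move=> r r0.
  have rc : 0 <= r + c by lra.
  have e1 := count_LL X' md' rc.
  have e2 := count_LL X md r0.
  have := A r r0.
  move: e1 e2; set a1 := count _ (LL d' X'); set a2 := count _ (LL d X).
  lia.
have cnt2 : forall r : R, 0 <= r ->
  (count (fun x : R => (r + c < x)%R) (LL d X) <= count (fun x : R => (r < x)%R) (LL d' X'))%N.
  move=> r r0.
  have rc : 0 <= r + c by lra.
  have e1 := count_LL X md rc.
  have e2 := count_LL X' md' r0.
  have := B r r0.
  move: e1 e2; set a1 := count _ (LL d X); set a2 := count _ (LL d' X').
  lia.
split.
- apply: match_ineq; [exact: sorted_LL | exact: sorted_LL | | exact: cnt2].
  by move=> x; apply: LL_pos.
- apply: match_ineq; [exact: sorted_LL | exact: sorted_LL | | exact: cnt1].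
  by move=> x; apply: LL_pos.
Qed.

Lemma le_lim (R : realType) (x y : R) : (forall eta, 0 < eta -> x <= y + 4 * eta) -> x <= y.
Proof.
move=> h; case: (lerP x y) => // hxy.
have e0 : 0 < (x - y) / 8 by apply: divr_gt0; lra.
have := h _ e0; lra.
Qed.

Lemma LLnth (R : realType) (T : finType) (d : T -> T -> R) (X : {set T}) i :
  nth 0 (LL d X) i = (nth (0, 0%N) (RL d X) i).1.
Proof.
rewrite /LL; case: (ltnP i (size (RL d X))) => hi; first by rewrite (nth_map (0, 0%N)).
by rewrite !nth_default ?size_map.
Qed.

Unset Implicit Arguments.
Theorem proposition6p3 (R : realType) (T T' : finType)
  (d : T -> T -> R) (d' : T' -> T' -> R) (X : {set T}) (X' : {set T'}) :
  is_metric d -> is_metric d' -> (0 < #|X|)%N -> (0 < #|X'|)%N ->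
  exists sigma : R * nat -> option (R * nat),
    delta_matching (2 * dGH d d' X X') (inRep (Nf d X)) (inRep (Nf d' X')) sigma.
Proof.
move=> md md' X0 X0'.
set L := RL d X. set L' := RL d' X'.
set D := dGH d d' X X'.
have hk := fun eta (e0 : 0 < eta) => key md md' X0 X0' e0.
have D0 : 0 <= D by have [] := hk 1 ltr01.
have sz : size (LL d X) = size L by rewrite /LL size_map.
have sz' : size (LL d' X') = size L' by rewrite /LL size_map.
have F1 : forall i, (i < size L)%N -> (i < size L')%N ->
    `|(nth (0, 0%N) L i).1 - (nth (0, 0%N) L' i).1| <= 2 * D.
  move=> i h1 h2; rewrite -!LLnth ler_norml; apply/andP; split.
    apply: le_lim => eta e0; have [_ [_ /(_ i)]] := hk eta e0.
    rewrite sz sz' => /(_ h2) [[_ hh]|[hh _]]; last by rewrite leqNgt h1 in hh.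
    rewrite -/D in hh; lra.
  apply: le_lim => eta e0; have [_ [/(_ i)]] := hk eta e0.
  rewrite sz sz' => /(_ h1) [[_ hh]|[hh _]] _; last by rewrite leqNgt h2 in hh.
  rewrite -/D in hh; lra.
have F2 : forall i, (i < size L)%N -> (size L' <= i)%N -> (nth (0, 0%N) L i).1 <= 2 * D.
  move=> i h1 h2; rewrite -LLnth.
  apply: le_lim => eta e0; have [_ [/(_ i)]] := hk eta e0.
  rewrite sz sz' => /(_ h1) [[hh _]|[_ hh]] _; first by rewrite ltnNge h2 in hh.
  rewrite -/D in hh; lra.
have F3 : forall i, (i < size L')%N -> (size L <= i)%N -> (nth (0, 0%N) L' i).1 <= 2 * D.
  move=> i h1 h2; rewrite -LLnth.
  apply: le_lim => eta e0; have [_ [_ /(_ i)]] := hk eta e0.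
  rewrite sz sz' => /(_ h1) [[hh _]|[_ hh]]; first by rewrite ltnNge h2 in hh.
  rewrite -/D in hh; lra.
pose sigma (s : R * nat) : option (R * nat) :=
  if s \in L then (if (index s L < size L')%N then Some (nth (0, 0%N) L' (index s L)) else None)
  else None.
exists sigma; split.
- split.
  + move=> s t _; rewrite /sigma; case: ifP => // sL; case: ifP => // hi [<-].
    by apply/(mem_RL _ _ md'); apply: mem_nth.
  + move=> s1 s2 t A1 A2.
    have s1L : s1 \in L by apply/(mem_RL _ _ md).
    have s2L : s2 \in L by apply/(mem_RL _ _ md).
    rewrite /sigma s1L s2L; case: ifP => // h1 [<-]; case: ifP => // h2 [].
    move/eqP; rewrite nth_uniq ?uniq_RL // => /eqP e.
    by rewrite -(nth_index (0, 0%N) s1L) -(nth_index (0, 0%N) s2L) e.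
- move=> s t A1; rewrite /sigma.
  have s1L : s \in L by apply/(mem_RL _ _ md).
  rewrite s1L; case: ifP => // h [<-].
  rewrite -{1}(nth_index (0, 0%N) s1L); apply: F1 => //.
  by rewrite index_mem.
- move=> s A1; rewrite /sigma.
  have s1L : s \in L by apply/(mem_RL _ _ md).
  rewrite s1L; case: ifP => // h _.
  rewrite -(nth_index (0, 0%N) s1L); apply: F2; first by rewrite index_mem.
  by rewrite leqNgt h.
- move=> t Bt hn.
  have tL : t \in L' by apply/(mem_RL _ _ md').
  rewrite -(nth_index (0, 0%N) tL); apply: F3; first by rewrite index_mem.
  rewrite leqNgt; apply/negP => hj.
  apply: hn; exists (nth (0, 0%N) L (index t L')); split.
    by apply/(mem_RL _ _ md); apply: mem_nth.
  rewrite /sigma mem_nth // index_uniq ?uniq_RL //.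
  by rewrite index_mem tL nth_index.
Qed.
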